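(* On the group $G_{\mathtt{ALD}}$ define binary operations $g*h:=g\cdot\mathrm{sh}_1(h)\cdot S_\varepsilon\cdot\mathrm{sh}_1(g)^{-1}$ and $g\circ h:=g\cdot\mathrm{sh}_1(h)\cdot A_\varepsilon$. Then for all $g,h,k\in G_{\mathtt{ALD}}$ and $\square\in\{*,\circ\}$: $(g*h)\,\square\,(g*k)=(g*(h\,\square\,k))\cdot S_0$; $(g\circ h)*k=(g*(h*k))\cdot A_0$; $(g\cdot\mathrm{sh}_0(k))\,\square\,h=(g\,\square\,h)\cdot\mathrm{sh}_{00}(k)$; $g\,\square\,(h\cdot\mathrm{sh}_0(k))=(g\,\square\,h)\cdot\mathrm{sh}_{01}(k)$.
   Context: Addresses are finite sequences over $\{0,1\}$, $\varepsilon$ empty, concatenation by juxtaposition; two addresses are incomparable if neither is a prefix of the other. $G_{\mathtt{ALD}}$ is the group generated by elements $S_\alpha,A_\alpha$ ($\alpha\in\{0,1\}^*$) subject to the following relations, where $X,Y$ each stand for $S$ or $A$ and $\alpha,\beta,\delta$ are arbitrary addresses ($\delta$ possibly empty): $X_\alpha Y_\beta=Y_\beta X_\alpha$ for $\alpha,\beta$ incomparable; $X_{\alpha0\delta}S_\alpha=S_\alpha X_{\alpha00\delta}X_{\alpha10\delta}$; $X_{\alpha10\delta}S_\alpha=S_\alpha X_{\alpha01\delta}$; $X_{\alpha11\delta}S_\alpha=S_\alpha X_{\alpha11\delta}$; $X_{\alpha0\delta}A_\alpha=A_\alpha X_{\alpha00\delta}$; $X_{\alpha10\delta}A_\alpha=A_\alpha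 X_{\alpha01\delta}$; $X_{\alpha11\delta}A_\alpha=A_\alpha X_{\alpha1\delta}$; $S_\alpha S_{\alpha1}S_\alpha=S_{\alpha1}S_\alpha S_{\alpha1}S_{\alpha0}$; $S_\alpha S_{\alpha1}A_\alpha=A_{\alpha1}S_\alpha S_{\alpha0}$; $A_\alpha S_\alpha=S_{\alpha1}S_\alpha A_{\alpha1}A_{\alpha0}$. For an address $\beta$, $\mathrm{sh}_\beta$ is the endomorphism of $G_{\mathtt{ALD}}$ with $S_\alpha\mapsto S_{\beta\alpha}$, $A_\alpha\mapsto A_{\beta\alpha}$. *)

(* Defs.v *)
(* The group G_ALD is presented as words in the
   generators S_alpha, A_alpha and their inverses, modulo the congruence
   generated by free cancellation and the defining relations.  Equality in
   G_ALD is [weq]. *)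
From mathcomp Require Import all_boot.

Set Implicit Arguments.
Unset Strict Implicit.
Unset Printing Implicit Defensive.

Inductive gen := GS | GA.

Definition address := seq bool.

(* a letter: generator kind, address, exponent sign (true = +1, false = -1) *)
Definition letter := (gen * address * bool)%type.
Definition word := seq letter.

Definition linv (x : letter) : letter := let: (g, a, s) := x in (g, a, ~~ s).

Definition wmul (u v : word) : word := u ++ v.
Definition winv (w : word) : word := rev (map linv w).
Definition wone : word := [::].

Definition X (g : gen) (a : address) : word := [:: (g, a, true)].
Definition S (a : address) : word := X GS a.
Definition A (a : address) : word := X GA a.

Definition incomparable (a b : address) : bool := ~~ prefix a b && ~~ prefix b a.

Definition sh (b : address) (w : word) : word :=
  map (fun x : letter => let: (g, a, s) := x in (g, b ++ a, s)) w.

Inductive ald_rel : word -> word -> Prop :=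
| R_comm (x y : gen) (a b : address) :
    incomparable a b -> ald_rel (X x a ++ X y b) (X y b ++ X x a)
| R_S0 (x : gen) (a d : address) :
    ald_rel (X x (a ++ false :: d) ++ S a)
            (S a ++ X x (a ++ false :: false :: d) ++ X x (a ++ true :: false :: d))
| R_S10 (x : gen) (a d : address) :
    ald_rel (X x (a ++ true :: false :: d) ++ S a) (S a ++ X x (a ++ false :: true :: d))
| R_S11 (x : gen) (a d : address) :
    ald_rel (X x (a ++ true :: true :: d) ++ S a) (S a ++ X x (a ++ true :: true :: d))
| R_A0 (x : gen) (a d : address) :
    ald_rel (X x (a ++ false :: d) ++ A a) (A a ++ X x (a ++ false :: false :: d))
| R_A10 (x : gen) (a d : address) :
    ald_rel (X x (a ++ true :: false :: d) ++ A a) (A a ++ X x (a ++ false :: true :: d))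
| R_A11 (x : gen) (a d : address) :
    ald_rel (X x (a ++ true :: true :: d) ++ A a) (A a ++ X x (a ++ true :: d))
| R_SSS (a : address) :
    ald_rel (S a ++ S (rcons a true) ++ S a)
            (S (rcons a true) ++ S a ++ S (rcons a true) ++ S (rcons a false))
| R_SSA (a : address) :
    ald_rel (S a ++ S (rcons a true) ++ A a)
            (A (rcons a true) ++ S a ++ S (rcons a false))
| R_AS (a : address) :
    ald_rel (A a ++ S a)
            (S (rcons a true) ++ S a ++ A (rcons a true) ++ A (rcons a false)).

Inductive weq : word -> word -> Prop :=
| weq_refl u : weq u u
| weq_sym u v : weq u v -> weq v u
| weq_trans u v w : weq u v -> weq v w -> weq u w
| weq_cat u u' v v' : weq u u' -> weq v v' -> weq (u ++ v) (u' ++ v')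
| weq_cancel (x : letter) : weq [:: x; linv x] [::]
| weq_rel u v : ald_rel u v -> weq u v.

Definition star (g h : word) : word :=
  g ++ sh [:: true] h ++ S [::] ++ winv (sh [:: true] g).
Definition circ (g h : word) : word :=
  g ++ sh [:: true] h ++ A [::].

(* Main.v *)
Require Import Defs.
From mathcomp Require Import all_boot.
From Stdlib Require Import Setoid Morphisms.

#[global] Instance weq_Equiv : Equivalence weq.
Proof. split; [exact: weq_refl| exact: weq_sym | exact: weq_trans]. Qed.
#[global] Instance cat_Proper : Proper (weq ==> weq ==> weq) (@cat letter).
Proof. move=> ? ? H ? ? H'; exact: weq_cat. Qed.

Lemma linvK x : linv (linv x) = x.
Proof. by case: x => [[g a] s]; rewrite /= negbK. Qed.
Lemma winv_cat u v : winv (u ++ v) = winv v ++ winv u.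
Proof. by rewrite /winv map_cat rev_cat. Qed.
Lemma winv_winv w : winv (winv w) = w.
Proof.
elim: w => [|x w IH] //.
rewrite -cat1s winv_cat winv_cat IH /winv /= linvK. by [].
Qed.
Lemma sh_cat b u v : sh b (u ++ v) = sh b u ++ sh b v.
Proof. exact: map_cat. Qed.
Lemma sh_winv b w : winv (sh b w) = sh b (winv w).
Proof.
rewrite /winv /sh map_rev -!map_comp; congr rev; apply eq_map.
by case=> [[g a] s].
Qed.
Lemma sh_sh b c w : sh b (sh c w) = sh (b ++ c) w.
Proof. rewrite /sh -map_comp; apply eq_map => [[[g a] s]] /=; by rewrite catA. Qed.
Lemma sh11 w : sh [:: true] (sh [:: true] w) = sh [:: true; true] w.
Proof. by rewrite sh_sh. Qed.
Lemma sh10 w : sh [:: true] (sh [:: false] w) = sh [:: true; false] w.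
Proof. by rewrite sh_sh. Qed.
Lemma S0sh : S [:: false] = sh [:: false] (S [::]).
Proof. by []. Qed.
Lemma A0sh : A [:: false] = sh [:: false] (A [::]).
Proof. by []. Qed.

Lemma weq_nil u v : weq (u ++ [::]) (v ++ [::]) -> weq u v.
Proof. by rewrite !cats0. Qed.

Lemma cancel1 w r : weq (w ++ winv w ++ r) r.
Proof.
elim: w r => [|x w IH] r; first reflexivity.

rewrite -[x :: w]cat1s winv_cat -!catA IH.
have := weq_cat (weq_cancel x) (weq_refl r). by [].
Qed.
Lemma cancel2 w r : weq (winv w ++ w ++ r) r.
Proof. by have := cancel1 (winv w) r; rewrite winv_winv. Qed.
Lemma cancel_sh1 b w r : weq (sh b w ++ sh b (winv w) ++ r) r.
Proof. rewrite -sh_winv; exact: cancel1. Qed.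
Lemma cancel_sh2 b w r : weq (sh b (winv w) ++ sh b w ++ r) r.
Proof. rewrite -sh_winv; exact: cancel2. Qed.

Lemma inv_l x c p : weq ([:: x] ++ c) (c ++ p) -> weq ([:: linv x] ++ c) (c ++ winv p).
Proof.
move=> H.
transitivity ([:: linv x] ++ (c ++ p) ++ winv p).
  rewrite -catA -[winv p]cats0 cancel1 cats0; reflexivity.
rewrite -H -catA.
have := weq_cat (weq_cancel (linv x)) (weq_refl (c ++ winv p)).
by rewrite linvK.
Qed.

Lemma comm_letter p q : incomparable p q -> forall x y s t,
  weq ([:: (x,p,s)] ++ [:: (y,q,t)]) ([:: (y,q,t)] ++ [:: (x,p,s)]).
Proof.
have H1 : forall p q, incomparable p q -> forall x y s,
  weq ([:: (x,p,s)] ++ [:: (y,q,true)]) ([:: (y,q,true)] ++ [:: (x,p,s)]).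
  move=> p0 q0 H x y [].
    exact: weq_rel (R_comm x y H).
  exact: (inv_l (x,p0,true) _ _ (weq_rel (R_comm x y H))).
move=> H x y s [].
  exact: H1.
have Hs : incomparable q p by rewrite /incomparable andbC.
apply: weq_sym; exact (inv_l (y,q,true) _ _ (weq_sym (H1 _ _ H x y s))).
Qed.

Lemma Comm b c (H : forall a a', incomparable (b ++ a) (c ++ a')) u v :
  weq (sh b u ++ sh c v) (sh c v ++ sh b u).
Proof.
have L : forall x a s v, weq ([:: (x, b++a, s)] ++ sh c v) (sh c v ++ [:: (x,b++a,s)]).
  move=> x a s; elim=> [|[[y a'] t] v' IH]; first reflexivity.
  have E1 := weq_cat (comm_letter _ _ (H a a') x y s t) (weq_refl (sh c v')).
  have E2 := weq_cat (weq_refl [:: (y, c ++ a', t)]) IH.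
  exact (weq_trans E1 E2).
elim: u => [|[[x a] s] u IH] /=; first by rewrite cats0; reflexivity.
change (weq ([:: (x,b++a,s)] ++ (sh b u ++ sh c v)) (sh c v ++ ([:: (x,b++a,s)] ++ sh b u))).
rewrite IH catA (L x a s v) -catA; reflexivity.
Qed.

Lemma CommR b c (H : forall a a', incomparable (b ++ a) (c ++ a')) u v r :
  weq (sh b u ++ sh c v ++ r) (sh c v ++ sh b u ++ r).
Proof. rewrite !catA (Comm _ _ H); reflexivity. Qed.

Lemma pass_sh b b' c :
  (forall g a, weq ([:: (g,b++a,true)] ++ c) (c ++ [:: (g,b'++a,true)])) ->
  forall w r, weq (sh b w ++ c ++ r) (c ++ sh b' w ++ r).
Proof.
move=> Hp.
have Hs : forall g a s, weq ([:: (g,b++a,s)] ++ c) (c ++ [:: (g,b'++a,s)]).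
  move=> g a [] //. exact: (inv_l (g,b++a,true) _ _ (Hp g a)).
elim=> [|[[g a] s] w IH] r /=; first reflexivity.
change (weq ([:: (g,b++a,s)] ++ (sh b w ++ c ++ r)) (c ++ ([:: (g,b'++a,s)] ++ sh b' w ++ r))).
rewrite IH catA Hs -catA; reflexivity.
Qed.

Notation SE := (S [::]).
Notation AE := (A [::]).

Lemma PS10 w r : weq (sh [:: true; false] w ++ SE ++ r) (SE ++ sh [:: false; true] w ++ r).
Proof. exact: (pass_sh [:: true; false] [:: false; true] SE (fun g a => weq_rel (R_S10 g [::] a))). Qed.
Lemma PS11 w r : weq (sh [:: true; true] w ++ SE ++ r) (SE ++ sh [:: true; true] w ++ r).
Proof. exact: (pass_sh [:: true; true] [:: true; true] SE (fun g a => weq_rel (R_S11 g [::] a))). Qed.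
Lemma PA0 w r : weq (sh [:: false] w ++ AE ++ r) (AE ++ sh [:: false; false] w ++ r).
Proof. exact: (pass_sh [:: false] [:: false; false] AE (fun g a => weq_rel (R_A0 g [::] a))). Qed.
Lemma PA10 w r : weq (sh [:: true; false] w ++ AE ++ r) (AE ++ sh [:: false; true] w ++ r).
Proof. exact: (pass_sh [:: true; false] [:: false; true] AE (fun g a => weq_rel (R_A10 g [::] a))). Qed.
Lemma PA11 w r : weq (sh [:: true; true] w ++ AE ++ r) (AE ++ sh [:: true] w ++ r).
Proof. exact: (pass_sh [:: true; true] [:: true] AE (fun g a => weq_rel (R_A11 g [::] a))). Qed.

Lemma C1_0 u v r : weq (sh [:: true] u ++ sh [:: false] v ++ r) (sh [:: false] v ++ sh [:: true] u ++ r).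
Proof. exact: (CommR [:: true] [:: false] (fun a a' => erefl)). Qed.
Lemma C0_1 u v r : weq (sh [:: false] u ++ sh [:: true] v ++ r) (sh [:: true] v ++ sh [:: false] u ++ r).
Proof. exact: (CommR [:: false] [:: true] (fun a a' => erefl)). Qed.
Lemma C11_0 u v r : weq (sh [:: true; true] u ++ sh [:: false] v ++ r) (sh [:: false] v ++ sh [:: true; true] u ++ r).
Proof. exact: (CommR [:: true; true] [:: false] (fun a a' => erefl)). Qed.
Lemma C00_1 u v r : weq (sh [:: false; false] u ++ sh [:: true] v ++ r) (sh [:: true] v ++ sh [:: false; false] u ++ r).
Proof. exact: (CommR [:: false; false] [:: true] (fun a a' => erefl)). Qed.
Lemma C01_1 u v r : weq (sh [:: false; true] u ++ sh [:: true] v ++ r) (sh [:: true] v ++ sh [:: false; true] u ++ r).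
Proof. exact: (CommR [:: false; true] [:: true] (fun a a' => erefl)). Qed.
Lemma C10_00 u v r : weq (sh [:: true; false] u ++ sh [:: false; false] v ++ r) (sh [:: false; false] v ++ sh [:: true; false] u ++ r).
Proof. exact: (CommR [:: true; false] [:: false; false] (fun a a' => erefl)). Qed.

Lemma KeySSS r : weq (SE ++ sh [::true] SE ++ SE ++ sh [::true] (winv SE) ++ r)
                     (sh [::true] SE ++ SE ++ sh [::false] SE ++ r).
Proof.
have E : weq (SE ++ sh [::true] SE ++ SE)
   (sh [::true] SE ++ SE ++ sh [::true] SE ++ sh [::false] SE) := weq_rel (R_SSS [::]).
transitivity ((SE ++ sh [::true] SE ++ SE) ++ sh [::true] (winv SE) ++ r).
  rewrite -!catA; reflexivity.
rewrite E -!catA (C1_0 SE SE) cancel_sh1; reflexivity.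
Qed.

Lemma KeySSA r : weq (SE ++ sh [::true] SE ++ AE ++ r)
                     (sh [::true] AE ++ SE ++ sh [::false] SE ++ r).
Proof.
have E : weq (SE ++ sh [::true] SE ++ AE)
   (sh [::true] AE ++ SE ++ sh [::false] SE) := weq_rel (R_SSA [::]).
transitivity ((SE ++ sh [::true] SE ++ AE) ++ r).
  rewrite -!catA; reflexivity.
rewrite E -!catA; reflexivity.
Qed.

Lemma KeyAS r : weq (AE ++ SE ++ sh [::true] (winv AE) ++ r)
                    (sh [::true] SE ++ SE ++ sh [::false] AE ++ r).
Proof.
have E : weq (AE ++ SE)
   (sh [::true] SE ++ SE ++ sh [::true] AE ++ sh [::false] AE) := weq_rel (R_AS [::]).
transitivity ((AE ++ SE) ++ sh [::true] (winv AE) ++ r).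
  rewrite -!catA; reflexivity.
rewrite E -!catA (C1_0 AE AE) cancel_sh1; reflexivity.
Qed.

Lemma PS0 w r : weq (sh [:: false] w ++ SE ++ r)
  (SE ++ sh [:: false; false] w ++ sh [:: true; false] w ++ r).
Proof.
have L0 : forall g a s, weq (sh [:: false] [:: (g,a,s)] ++ SE)
   (SE ++ sh [::false;false] [:: (g,a,s)] ++ sh [:: true;false] [:: (g,a,s)]).
  move=> g a [].
    exact: weq_rel (R_S0 g [::] a).
  have := inv_l (g, false :: a, true) _ _ (weq_rel (R_S0 g [::] a)).
  move=> H; apply: weq_trans H _.
  apply: weq_cat (weq_refl _) _.
  exact: (comm_letter (true :: false :: a) (false :: false :: a) erefl g g false false).
elim: w r => [|[[g a] s] w IH] r; first reflexivity.
change (weq (sh [:: false] [:: (g,a,s)] ++ (sh [:: false] w ++ SE ++ r))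
  (SE ++ (sh [:: false;false] [:: (g,a,s)] ++ sh [:: false; false] w)
      ++ (sh [:: true;false] [:: (g,a,s)] ++ sh [:: true;false] w) ++ r)).
rewrite IH -!catA -(C10_00 [:: (g,a,s)] w) !catA L0 -!catA; reflexivity.
Qed.

Ltac nf := rewrite ?S0sh ?A0sh /star /circ;
  rewrite ?(sh_cat, winv_cat, sh_winv, winv_winv, sh11, sh10);
  apply: weq_nil; rewrite -!catA.


Lemma id1s g h k : weq (star (star g h) (star g k)) (star g (star h k) ++ S [:: false]).
Proof.
nf. rewrite (cancel_sh2 [:: true] g) (PS11 (winv g)) (cancel_sh2 [:: true;true] g) -(PS11 k) KeySSS.
rewrite (C1_0 (winv g) SE) (PS11 (winv h)) (C11_0 (winv h) SE); reflexivity.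
Qed.
Lemma id1c g h k : weq (circ (star g h) (star g k)) (star g (circ h k) ++ S [:: false]).
Proof.
nf. rewrite (cancel_sh2 [:: true] g) (PA11 (winv g)) -(PS11 k) KeySSA (C1_0 (winv g) SE); reflexivity.
Qed.
Lemma id2 g h k : weq (star (circ g h) k) (star g (star h k) ++ A [:: false]).
Proof.
nf. rewrite -(PA11 k) KeyAS (C1_0 (winv g) AE) (PS11 (winv h)) (C11_0 (winv h) AE); reflexivity.
Qed.
Lemma id3s g h k : weq (star (g ++ sh [:: false] k) h) (star g h ++ sh [:: false; false] k).
Proof.
nf. rewrite (C0_1 k h) (PS0 k) (cancel_sh1 [:: true;false] k) (C00_1 k (winv g)); reflexivity.
Qed.
Lemma id3c g h k : weq (circ (g ++ sh [:: false] k) h) (circ g h ++ sh [:: false; false] k).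
Proof. nf. rewrite (C0_1 k h) (PA0 k); reflexivity. Qed.
Lemma id4s g h k : weq (star g (h ++ sh [:: false] k)) (star g h ++ sh [:: false; true] k).
Proof. nf. rewrite (PS10 k) (C01_1 k (winv g)); reflexivity. Qed.
Lemma id4c g h k : weq (circ g (h ++ sh [:: false] k)) (circ g h ++ sh [:: false; true] k).
Proof. nf. rewrite (PA10 k); reflexivity. Qed.

Theorem lemma4p3 :
  forall (box : word -> word -> word), (box = star \/ box = circ) ->
  forall g h k : word,
    weq (box (star g h) (star g k)) (star g (box h k) ++ S [:: false]) /\
    weq (star (circ g h) k) (star g (star h k) ++ A [:: false]) /\
    weq (box (g ++ sh [:: false] k) h) (box g h ++ sh [:: false; false] k) /\
    weq (box g (h ++ sh [:: false] k)) (box g h ++ sh [:: false; true] k).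
Proof.
move=> box [->|->] g h k; (split; [|split; [exact: id2|split]]).
- exact: id1s.
- exact: id3s.
- exact: id4s.
- exact: id1c.
- exact: id3c.
- exact: id4c.
Qed.
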